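(* Let $g:\mathbb{Z}^d\to[0,\infty)$ be of the form $g(z)=\prod_{i=1}^d g_i(z_i)$, where each $g_i:\mathbb{Z}\to[0,\infty)$ is summable and log-concave. Let $f:\mathbb{Z}^d\to[0,\infty)$ be summable and log-supermodular. Then $f*g(x)=\sum_{z\in\mathbb{Z}^d}f(x-z)g(z)$ is log-supermodular on $\mathbb{Z}^d$.
   Context: A function $h:\mathbb{Z}\to[0,\infty)$ is log-concave if $\{h>0\}=I\cap\mathbb{Z}$ for some (possibly infinite) interval $I\subseteq\mathbb{R}$ and $h(n)^2\ge h(n+1)h(n-1)$ for all $n\in I$ (equivalently, $h$ admits a log-concave interpolation on $\mathbb{R}$). For $x,y\in\mathbb{Z}^d$, $(x\wedge y)_i=\min(x_i,y_i)$, $(x\vee y)_i=\max(x_i,y_i)$; $f$ is log-supermodular if $f(x)f(y)\le f(x\wedge y)f(x\vee y)$ for all $x,y\in\mathbb{Z}^d$. *)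

(* Defs.v *)
From HB Require Import structures.
From mathcomp Require Import all_boot all_order all_algebra.
From mathcomp Require Import all_classical all_reals all_analysis.
Set Implicit Arguments. Unset Strict Implicit. Unset Printing Implicit Defensive.
Import Order.TTheory GRing.Theory Num.Theory.
Local Open Scope ring_scope.
Local Open Scope classical_set_scope.

Notation Zd d := {ffun 'I_d -> int}.

Definition zmeet (d : nat) (x y : Zd d) : Zd d := [ffun i => Num.min (x i) (y i)].
Definition zjoin (d : nat) (x y : Zd d) : Zd d := [ffun i => Num.max (x i) (y i)].

Definition log_concave_Z (R : realType) (h : int -> R) : Prop :=
  exists I : interval R,
    (forall n : int, 0 < h n <-> (n%:~R : R) \in I) /\
    (forall n : int, (n%:~R : R) \in I -> h (n + 1) * h (n - 1) <= h n ^+ 2).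

Definition log_supermodular (R : realType) (d : nat) (f : Zd d -> R) : Prop :=
  forall x y : Zd d, f x * f y <= f (zmeet x y) * f (zjoin x y).

Definition summable_fun (T : choiceType) (R : realType) (f : T -> R) : Prop :=
  summable setT (fun z => (f z)%:E).

Definition zconv (R : realType) (d : nat) (f g : Zd d -> R) (x : Zd d) : R :=
  fine (\esum_(z in setT) ((f (x - z) * g z)%:E))%E.

(* Main.v *)
Require Import Defs.
From HB Require Import structures.
From mathcomp Require Import all_boot all_order all_algebra.
From mathcomp Require Import all_classical all_reals all_analysis.
From mathcomp Require Import ring lra zify.
Import Order.TTheory GRing.Theory Num.Theory.
Local Open Scope ring_scope.
Set Implicit Arguments. Unset Strict Implicit. Unset Printing Implicit Defensive.

Lemma pair_ineq (R : realType) (p q P Q : R) : 0 <= p -> 0 <= q -> 0 <= P -> 0 <= Q ->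
  p <= P -> q <= P -> p * q <= P * Q -> p + q <= P + Q.
Proof.
move=> p0 q0 P0 Q0 pP qP pq.
have [Pz|Pgt0] := eqVneq P 0.
  by rewrite Pz in pP qP *; lra.
have PP : 0 < P by rewrite lt_def Pgt0 P0.
have h1 : 0 <= (P - p) * (P - q) by apply: mulr_ge0; rewrite subr_ge0.
have : P * (p + q) <= P * (P + Q) by nra.
by rewrite ler_pM2l.
Qed.

Lemma chain4 (R : realType) (N : nat) (a b c e : nat -> R) :
  (forall i, 0 <= a i) -> (forall i, 0 <= b i) -> (forall i, 0 <= c i) -> (forall i, 0 <= e i) ->
  (forall i j, (i < N)%N -> (j < N)%N -> a i * b j <= c (minn i j) * e (maxn i j)) ->
  (\sum_(i < N) a i) * (\sum_(i < N) b i) <= (\sum_(i < N) c i) * (\sum_(i < N) e i).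
Proof.
move=> a0 b0 c0 e0; elim: N => [|N IH] H; first by rewrite !big_ord0 !mul0r.
rewrite !big_ord_recr /=.
have IH' := IH (fun i j hi hj => H i j (ltnW (leq_trans hi (leqnn _)) ) (ltnW hj)).
set A := \sum_(i < N) a i; set B := \sum_(i < N) b i.
set C := \sum_(i < N) c i; set D := \sum_(i < N) e i.
have HNN : a N * b N <= c N * e N by have := H N N (ltnSn _) (ltnSn _); rewrite minnn maxnn.
have Hmid : A * b N + a N * B <= C * e N + c N * D.
  rewrite /A /B /C /D !mulr_suml !mulr_sumr -!big_split /=.
  apply: ler_sum => i _.
  have iN : (i < N.+1)%N by apply: ltnW; rewrite ltnS.
  have HiN := H i N iN (ltnSn _).
  have HNi := H N i (ltnSn _) iN.
  have Hii := H i i iN iN.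
  rewrite minnn maxnn in Hii.
  rewrite (minn_idPl (ltnW (ltn_ord i))) (maxn_idPr (ltnW (ltn_ord i))) in HiN.
  rewrite (minn_idPr (ltnW (ltn_ord i))) (maxn_idPl (ltnW (ltn_ord i))) in HNi.
  have Hpq : (a i * b N) * (a N * b i) <= (c i * e N) * (c N * e i).
    have := ler_pM (mulr_ge0 (a0 i) (b0 i)) (mulr_ge0 (a0 N) (b0 N)) Hii HNN.
    have -> : (a i * b N) * (a N * b i) = (a i * b i) * (a N * b N) by ring.
    by have -> : (c i * e N) * (c N * e i) = (c i * e i) * (c N * e N) by ring.
  by apply: pair_ineq; rewrite ?mulr_ge0.
have IHv : A * B <= C * D by exact: IH'.
nra.
Qed.
Definition tmeet (d N : nat) (a b : {ffun 'I_d -> 'I_N}) : {ffun 'I_d -> 'I_N} :=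
  [ffun i => if (a i < b i)%N then a i else b i].
Definition tjoin (d N : nat) (a b : {ffun 'I_d -> 'I_N}) : {ffun 'I_d -> 'I_N} :=
  [ffun i => if (a i < b i)%N then b i else a i].

Arguments tmeet {d N}.
Arguments tjoin {d N}.
Lemma tmeetE d N a b i : (@tmeet d N a b i : nat) = minn (a i) (b i).
Proof. by rewrite ffunE /minn; case: ifP. Qed.
Lemma tjoinE d N a b i : (@tjoin d N a b i : nat) = maxn (a i) (b i).
Proof. by rewrite ffunE /maxn; case: ifP. Qed.

Definition agree (d N k : nat) (p a : {ffun 'I_d -> 'I_N}) : bool :=
  [forall i : 'I_d, (k <= i)%N ==> (a i == p i)].

Definition upd (d N : nat) (p : {ffun 'I_d -> 'I_N}) (j : 'I_d) (t : 'I_N) :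
  {ffun 'I_d -> 'I_N} := [ffun i => if i == j then t else p i].

Arguments agree {d N}.
Arguments upd {d N}.
Lemma four_functions (R : realType) (d N : nat)
  (al be ga de : {ffun 'I_d -> 'I_N.+1} -> R) :
  (forall a, 0 <= al a) -> (forall a, 0 <= be a) -> (forall a, 0 <= ga a) -> (forall a, 0 <= de a) ->
  (forall a b, al a * be b <= ga (tmeet a b) * de (tjoin a b)) ->
  (\sum_a al a) * (\sum_a be a) <= (\sum_a ga a) * (\sum_a de a).
Proof.
move=> al0 be0 ga0 de0 H.
suff K : forall k, (k <= d)%N -> forall p q,
  (\sum_(a | agree k p a) al a) * (\sum_(a | agree k q a) be a) <=
  (\sum_(a | agree k (tmeet p q) a) ga a) * (\sum_(a | agree k (tjoin p q) a) de a).
  have p0 : {ffun 'I_d -> 'I_N.+1} := [ffun => ord0].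
  have := K d (leqnn d) p0 p0.
  have E : forall p a : {ffun 'I_d -> 'I_N.+1}, agree d p a.
    rewrite /agree.
    by move=> p a; apply/forallP => i; rewrite /= leqNgt ltn_ord.
  by rewrite !(eq_bigl _ _ (E _)).
elim=> [|k IH] kd p q.
  have E : forall p a : {ffun 'I_d -> 'I_N.+1}, agree 0 p a = (a == p).
    move=> p' a; rewrite /agree; apply/forallP/eqP => [h|->]; last by move=> i; rewrite eqxx implybT.
    by apply/ffunP => i; apply/eqP; have := h i.
  by rewrite !(eq_bigl _ _ (E _)) !big_pred1_eq.
have kd' : (k < d)%N by [].
pose j := Ordinal kd'.
have dec : forall (F : {ffun 'I_d -> 'I_N.+1} -> R) p,
    \sum_(a | agree k.+1 p a) F a = \sum_(t < N.+1) \sum_(a | agree k (upd p j (inord t)) a) F a.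
  move=> F p'.
  rewrite (partition_big (fun a : {ffun 'I_d -> 'I_N.+1} => a j) xpredT) //=.
  apply: eq_bigr => t _; rewrite inord_val; apply: eq_bigl => a; rewrite /agree.
  apply/andP/forallP => [[/forallP h /eqP ha] i|h].
    apply/implyP => ki; rewrite ffunE; have [->|ne] := eqVneq i j; first by rewrite ha.
    apply: (implyP (h i)); rewrite ltn_neqAle ki andbT; apply/eqP => e.
    by move/eqP: ne; apply; apply: val_inj.
  split.
    apply/forallP => i; apply/implyP => ki.
    have := implyP (h i) (ltnW ki); rewrite ffunE.
    by have [e|//] := eqVneq i j; move: ki; rewrite e /= ltnn.
  by have := implyP (h j) (leqnn _); rewrite ffunE eqxx.
rewrite !dec.
apply: (@chain4 R N.+1 (fun t => \sum_(a | agree k (upd p j (inord t)) a) al a)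
  (fun t => \sum_(a | agree k (upd q j (inord t)) a) be a)
  (fun t => \sum_(a | agree k (upd (tmeet p q) j (inord t)) a) ga a)
  (fun t => \sum_(a | agree k (upd (tjoin p q) j (inord t)) a) de a)).
- by move=> t; apply: sumr_ge0.
- by move=> t; apply: sumr_ge0.
- by move=> t; apply: sumr_ge0.
- by move=> t; apply: sumr_ge0.
move=> t s ht hs.
have := IH (ltnW kd) (upd p j (inord t)) (upd q j (inord s)).
have -> : tmeet (upd p j (inord t)) (upd q j (inord s)) = upd (tmeet p q) j (inord (minn t s)).
  apply/ffunP => i; apply: val_inj; rewrite /= tmeetE /upd !ffunE.
  case: (i == j); last by rewrite /minn; case: ifP.
  by rewrite (inordK ht) (inordK hs) inordK // gtn_min ht.
have -> : tjoin (upd p j (inord t)) (upd q j (inord s)) = upd (tjoin p q) j (inord (maxn t s)).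
  apply/ffunP => i; apply: val_inj; rewrite /= tjoinE /upd !ffunE.
  case: (i == j); last by rewrite /maxn; case: ifP.
  by rewrite (inordK ht) (inordK hs) inordK // gtn_max ht hs.
done.
Qed.
Lemma lc_nat (R : realType) (phi : nat -> R) (m : nat) :
  (forall k, (k <= m)%N -> 0 < phi k) ->
  (forall k, (k.+2 <= m)%N -> phi k.+2 * phi k <= phi k.+1 ^+ 2) ->
  forall j, (j <= m)%N -> phi 0 * phi m <= phi j * phi (m - j)%N.
Proof.
move=> pos loc.
pose rho k := phi k.+1 / phi k.
have R1 : forall k, (k.+2 <= m)%N -> rho k.+1 <= rho k.
  move=> k hk.
  have p0 := pos k (leq_trans (leqnSn _) (ltnW hk)).
  have p1 := pos k.+1 (ltnW hk).
  have p2 := pos k.+2 hk.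
  rewrite -subr_ge0.
  have -> : rho k - rho k.+1 = (phi k.+1 ^+ 2 - phi k.+2 * phi k) / (phi k * phi k.+1).
    by rewrite /rho; field; rewrite ?gt_eqF //; apply/andP; split; rewrite gt_eqF.
  by apply: divr_ge0; [rewrite subr_ge0; exact: loc | apply: mulr_ge0; apply: ltW].
have R2 : forall a b, (a <= b)%N -> (b < m)%N -> rho b <= rho a.
  move=> a; elim=> [|b IH] ab bm; first by move: ab; rewrite leqn0 => /eqP ->.
  move: ab; rewrite leq_eqVlt => /orP[/eqP -> //|]; rewrite ltnS => ab.
  exact: le_trans (R1 b bm) (IH ab (ltnW bm)).
have phiS : forall k, (k < m)%N -> phi k.+1 = rho k * phi k.
  by move=> k km; rewrite /rho divfK // gt_eqF // pos // ltnW.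
have R4 : forall j, (j.*2 <= m)%N -> phi 0 * phi m <= phi j * phi (m - j)%N.
  elim=> [|j IH] hj; first by rewrite subn0.
  have hj' : (j.*2 <= m)%N by apply: leq_trans hj; rewrite doubleS ltnW // ltnS.
  apply: le_trans (IH hj') _.
  set b := (m - j.+1)%N.
  have jm : (j < m)%N by move: hj; rewrite doubleS -addnn; lia.
  have Eb : (m - j)%N = b.+1 by rewrite /b; lia.
  have jb : (j <= b)%N by rewrite /b; move: hj; rewrite doubleS -addnn; lia.
  have bm : (b < m)%N by rewrite /b; lia.
  rewrite Eb phiS // (phiS j) //.
  have pj := pos j (ltnW jm).
  have pb := pos b (ltnW bm).
  have := R2 j b jb bm.
  have hh : 0 <= phi j * phi b by apply: mulr_ge0; apply: ltW.
  move=> r; have := ler_wpM2l hh r.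
  have -> : phi j * (rho b * phi b) = phi j * phi b * rho b by ring.
  by have -> : rho j * phi j * phi b = phi j * phi b * rho j by ring.
move=> j jm.
have [h|h] := leqP j.*2 m; first exact: R4.
have h' : ((m - j).*2 <= m)%N by move: h; rewrite -!addnn; lia.
by have := R4 _ h'; rewrite subKn // [phi (m - j)%N * _]mulrC.
Qed.

Lemma itv_convex (R : realType) (I : interval R) (x y z : R) :
  x \in I -> y \in I -> x <= z -> z <= y -> z \in I.
Proof.
case: I => l r; rewrite !itv_boundlr => /andP[h1 _] /andP[_ h2] xz zy.
apply/andP; split.
  by apply: le_trans h1 _; rewrite bnd_simp.
by apply: le_trans h2; rewrite bnd_simp.
Qed.

Lemma lc_int (R : realType) (g : int -> R) : log_concave_Z g -> (forall n, 0 <= g n) ->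
  forall s u v t : int, s <= u -> s <= v -> u + v = s + t -> g s * g t <= g u * g v.
Proof.
move=> [I [supp loc]] g0 s u v t su sv e.
have [gs0|gs0] := eqVneq (g s) 0; first by rewrite gs0 mul0r mulr_ge0.
have [gt0|gt0] := eqVneq (g t) 0; first by rewrite gt0 mulr0 mulr_ge0.
have sI : (s%:~R : R) \in I by apply/supp; rewrite lt_def gs0 g0.
have tI : (t%:~R : R) \in I by apply/supp; rewrite lt_def gt0 g0.
have ut : u <= t by lia.
have st : s <= t by lia.
have [m Em] : exists m : nat, t = s + m%:Z.
  by exists `|t - s|%N; rewrite gez0_abs ?subr_ge0 //; ring.
have [j Ej] : exists j : nat, u = s + j%:Z.
  by exists `|u - s|%N; rewrite gez0_abs ?subr_ge0 //; ring.
have jm : (j <= m)%N by lia.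
have Ev : v = s + (m - j)%N%:Z by lia.
have inI : forall k, (k <= m)%N -> ((s + k%:Z)%:~R : R) \in I.
  move=> k km; apply: (@itv_convex R I _ _ _ sI tI); rewrite ler_int; lia.
pose phi k := g (s + k%:Z).
have := @lc_nat R phi m _ _ j jm.
rewrite /phi Ej Ev Em addr0; apply.
  by move=> k km; apply/supp/inI.
move=> k km; have := loc _ (inI k.+1 (ltnW km)).
have -> : s + k.+1%:Z + 1 = s + k.+2%:Z by lia.
by have -> : s + k.+1%:Z - 1 = s + k%:Z by lia.
Qed.
Lemma tp2 (R : realType) (g : int -> R) : log_concave_Z g -> (forall n, 0 <= g n) ->
  forall x y w v : int,
  g (x - w) * g (y - v) <= g (Num.min x y - Num.min w v) * g (Num.max x y - Num.max w v).
Proof.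
move=> lc g0 x y w v.
have [xy|yx] := lerP x y; have [wv|vw] := lerP w v.
- by [].
- apply: (@lc_int _ g lc g0); lia.
- rewrite mulrC; apply: (@lc_int _ g lc g0); lia.
- by rewrite mulrC.
Qed.

Lemma subfE (d : nat) (x w : {ffun 'I_d -> int}) i : (x - w) i = x i - w i.
Proof. by rewrite !ffunE. Qed.

Definition Gp (R : realType) (d : nat) (gi : 'I_d -> int -> R) (z : {ffun 'I_d -> int}) : R :=
  \prod_(i < d) gi i (z i).

Lemma Gp_ge0 (R : realType) d (gi : 'I_d -> int -> R) z : (forall i n, 0 <= gi i n) -> 0 <= Gp gi z.
Proof. by move=> g0; apply: prodr_ge0 => i _. Qed.

Lemma Gp_tp2 (R : realType) d (gi : 'I_d -> int -> R) :
  (forall i n, 0 <= gi i n) -> (forall i, log_concave_Z (gi i)) ->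
  forall x y w v : {ffun 'I_d -> int},
  Gp gi (x - w) * Gp gi (y - v) <=
  Gp gi (zmeet x y - zmeet w v) * Gp gi (zjoin x y - zjoin w v).
Proof.
move=> g0 lc x y w v; rewrite /Gp -!big_split /=.
apply: ler_prod => i _; apply/andP; split; first by rewrite mulr_ge0.
rewrite !subfE !ffunE; exact: tp2.
Qed.

Definition hh (R : realType) d (gi : 'I_d -> int -> R) (f : {ffun 'I_d -> int} -> R)
  (x w : {ffun 'I_d -> int}) : R := f w * Gp gi (x - w).

Lemma hh_ge0 (R : realType) d (gi : 'I_d -> int -> R) f x w :
  (forall i n, 0 <= gi i n) -> (forall z, 0 <= f z) -> 0 <= hh gi f x w.
Proof. by move=> g0 f0; rewrite mulr_ge0 ?Gp_ge0. Qed.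

Lemma hh_lsm (R : realType) d (gi : 'I_d -> int -> R) f :
  (forall i n, 0 <= gi i n) -> (forall i, log_concave_Z (gi i)) ->
  (forall z, 0 <= f z) -> log_supermodular f ->
  forall x y w v, hh gi f x w * hh gi f y v <=
    hh gi f (zmeet x y) (zmeet w v) * hh gi f (zjoin x y) (zjoin w v).
Proof.
move=> g0 lc f0 fl x y w v; rewrite /hh.
have -> : f w * Gp gi (x - w) * (f v * Gp gi (y - v)) =
  (f w * f v) * (Gp gi (x - w) * Gp gi (y - v)) by ring.
have -> : f (zmeet w v) * Gp gi (zmeet x y - zmeet w v) * (f (zjoin w v) * Gp gi (zjoin x y - zjoin w v)) =
  (f (zmeet w v) * f (zjoin w v)) * (Gp gi (zmeet x y - zmeet w v) * Gp gi (zjoin x y - zjoin w v)) by ring.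
apply: ler_pM.
- by rewrite mulr_ge0.
- by rewrite mulr_ge0 ?Gp_ge0.
- exact: fl.
- exact: Gp_tp2.
Qed.
Local Open Scope classical_set_scope.

Lemma esum_finE (T : choiceType) (R : realType) (h : T -> R) :
  (forall z, 0 <= h z) -> summable_fun h ->
  \esum_(z in setT) (h z)%:E = (fine (\esum_(z in setT) (h z)%:E))%:E.
Proof.
move=> h0 hs.
have e : \esum_(z in setT) (h z)%:E = \esum_(z in setT) `|(h z)%:E|%E.
  by apply: eq_esum => z _; rewrite abse_EFin ger0_norm.
rewrite fineK // ge0_fin_numE ?e //; last by apply: esum_ge0 => z _; rewrite lee_fin.
Qed.

Lemma term_le_esum (T : choiceType) (R : realType) (h : T -> R) z :
  (forall z, 0 <= h z) -> ((h z)%:E <= \esum_(z in setT) (h z)%:E)%E.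
Proof.
move=> h0; apply: esum_ge; exists [set z]; last by rewrite fsbig_set1.
by split; [exact: finite_set1 | by []].
Qed.

Lemma fine_esum_le (T : choiceType) (R : realType) (h : T -> R) (c : R) :
  (forall z, 0 <= h z) ->
  (forall X, finite_set X -> \sum_(w \in X) h w <= c) ->
  fine (\esum_(z in setT) (h z)%:E) <= c.
Proof.
move=> h0 H.
have Hc : (\esum_(z in setT) (h z)%:E <= c%:E)%E.
  apply: ge_ereal_sup => _ [X [finX _] <-]; rewrite fsumEFin // lee_fin; exact: H.
move: Hc; case: (\esum_(z in setT) (h z)%:E) => [r||] //=.
move=> _; have := H set0 (finite_set0 _); rewrite fsbig_set0; apply.
Qed.

Lemma box_sum (R : realType) (T : finType) (U : choiceType) (emb : T -> U) (h : U -> R) :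
  injective emb ->
  (\sum_(w \in range emb) (h w)%:E)%E = (\sum_(a : T) h (emb a))%:E.
Proof.
move=> inj; rewrite fsbig_image; last by move=> a b _ _ /inj.
have -> : [set: T] = [set` enum T] by apply/seteqP; split => a //= _; rewrite mem_enum.
by rewrite -fsbig_seq ?enum_uniq // sumEFin big_enum.
Qed.
Lemma box_exists (d : nat) (S : set {ffun 'I_d -> int}) : finite_set S ->
  exists N (emb : {ffun 'I_d -> 'I_N.+1} -> {ffun 'I_d -> int}),
  [/\ injective emb, S `<=` range emb,
      (forall a b, emb (tmeet a b) = zmeet (emb a) (emb b)) &
      (forall a b, emb (tjoin a b) = zjoin (emb a) (emb b))].
Proof.
move=> /finite_seqP [sS ->].
set B := (\sum_(w <- sS) \sum_(i < d) `|w i|)%N.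
have HB : forall w, [set` sS] w -> forall i, (`|w i| <= B)%N.
  move=> w Sw i.
  by rewrite /B (big_rem w Sw) /= (bigD1 i) //= -addnA leq_addr.
exists (B + B)%N, (fun a : {ffun 'I_d -> 'I_(B + B).+1} => [ffun i : 'I_d => - B%:Z + (a i : nat)%:Z]); split.
- move=> a b /ffunP e; apply/ffunP => i; apply: val_inj.
  by have := e i; rewrite !ffunE => /addrI [].
- move=> w Sw; exists [ffun i => inord (absz (w i + B%:Z))] => //.
  apply/ffunP => i; have h1 := HB w Sw i.
  move: h1; rewrite -lez_nat abszE ler_norml => /andP[hl hr].
  have h0 : 0 <= w i + B%:Z by rewrite -lerBlDr sub0r.
  rewrite !ffunE inordK; first by rewrite gez0_abs // addrC addrK.
  rewrite -ltz_nat gez0_abs //.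
  apply: (@le_lt_trans _ _ (B + B)%N%:Z); last by rewrite ltz_nat.
  by rewrite PoszD lerD2r.
- move=> a b; apply/ffunP => i; rewrite !ffunE /=.
  have [h|h] := ltnP (a i) (b i).
    by rewrite min_l // lerD2l lez_nat ltnW.
  by rewrite min_r // lerD2l lez_nat.
- move=> a b; apply/ffunP => i; rewrite !ffunE /=.
  have [h|h] := ltnP (a i) (b i).
    by rewrite max_r // lerD2l lez_nat ltnW.
  by rewrite max_l // lerD2l lez_nat.
Qed.
Lemma esum_bounded_finE (T : choiceType) (R : realType) (h : T -> R) (c : R) :
  (forall z, 0 <= h z) ->
  (forall X, finite_set X -> \sum_(w \in X) h w <= c) ->
  \esum_(z in setT) (h z)%:E = (fine (\esum_(z in setT) (h z)%:E))%:E.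
Proof.
move=> h0 H.
have Hc : (\esum_(z in setT) (h z)%:E <= c%:E)%E.
  apply: ge_ereal_sup => _ [X [finX _] <-]; rewrite fsumEFin // lee_fin; exact: H.
have E0 : (0 <= \esum_(z in setT) (h z)%:E)%E by apply: esum_ge0 => z _; rewrite lee_fin.
by move: Hc E0; case: (\esum_(z in setT) (h z)%:E) => [r||] //=.
Qed.

Lemma fsum_le (T : choiceType) (R : realType) (X : set T) (F1 F2 : T -> R) :
  finite_set X -> (forall x, F1 x <= F2 x) -> \sum_(x \in X) F1 x <= \sum_(x \in X) F2 x.
Proof. by move=> fX H; rewrite !fsbig_finite //; apply: ler_sum => x _; exact: H. Qed.

Lemma fsum_le_fine (T : choiceType) (R : realType) (h : T -> R) (X : set T) :
  (forall z, 0 <= h z) ->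
  \esum_(z in setT) (h z)%:E = (fine (\esum_(z in setT) (h z)%:E))%:E ->
  finite_set X -> \sum_(w \in X) h w <= fine (\esum_(z in setT) (h z)%:E).
Proof.
move=> h0 E fX; rewrite -lee_fin -fsumEFin // -E.
by apply: esum_ge; exists X => //; split.
Qed.

Lemma zconvE (R : realType) (d : nat) (gi : 'I_d -> int -> R) (f : {ffun 'I_d -> int} -> R) x :
  zconv f (fun z => \prod_(i < d) gi i (z i)) x = fine (\esum_(w in setT) (hh gi f x w)%:E).
Proof.
rewrite /zconv; congr fine.
rewrite (@reindex_esum _ _ _ setT setT (fun w => x - w)); last first.
  by rewrite setTT_bijective; exact: inv_bij (subKr x).
apply: eq_esum => w _; rewrite /hh /Gp.
by have -> : x - (x - w) = w by rewrite opprB addrCA subrr addr0.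
Qed.

Theorem theorem3p5_aux (R : realType) (d : nat)
  (gi : 'I_d -> int -> R) (f : {ffun 'I_d -> int} -> R) :
  (forall i n, 0 <= gi i n) ->
  (forall i, summable_fun (gi i)) ->
  (forall i, log_concave_Z (gi i)) ->
  (forall z, 0 <= f z) ->
  summable_fun f ->
  log_supermodular f ->
  log_supermodular (zconv f (fun z => \prod_(i < d) gi i (z i))).
Proof.
move=> g0 gs lc f0 fs fl x y.
pose F z := fine (\esum_(w in setT) (hh gi f z w)%:E).
suff : F x * F y <= F (zmeet x y) * F (zjoin x y) by rewrite !zconvE.
pose Sf := fine (\esum_(z in setT) (f z)%:E).
have EfE := esum_finE f0 fs.
pose Mi i := fine (\esum_(n in setT) (gi i n)%:E).
have gle : forall i n, gi i n <= Mi i.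
  move=> i n; rewrite -lee_fin -(esum_finE (g0 i) (gs i)).
  exact: (@term_le_esum _ _ (gi i) n (g0 i)).
pose M := \prod_(i < d) Mi i.
have Gle : forall z, Gp gi z <= M.
  by move=> z; apply: ler_prod => i _; rewrite g0 gle.
have hfin : forall z, \esum_(w in setT) (hh gi f z w)%:E = (F z)%:E.
  move=> z; apply: (@esum_bounded_finE _ _ _ (Sf * M)) => [w|X fX].
    exact: hh_ge0.
  apply: le_trans (_ : _ <= \sum_(w \in X) f w * M) _.
    apply: fsum_le => // w; rewrite /hh; apply: ler_wpM2l => //; exact: Gle.
  rewrite -mulr_fsuml; apply: ler_wpM2r.
    by apply: le_trans (Gle z); apply: Gp_ge0.
  exact: fsum_le_fine.
have F0 : forall z, 0 <= F z.
  by move=> z; apply: fine_ge0; apply: esum_ge0 => w _; rewrite lee_fin hh_ge0.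
have PS : forall X Y, finite_set X -> finite_set Y ->
    (\sum_(w \in X) hh gi f x w) * (\sum_(w \in Y) hh gi f y w) <=
    F (zmeet x y) * F (zjoin x y).
  move=> X Y fX fY.
  have fXY : finite_set (X `|` Y) by rewrite finite_setU.
  have [N [emb [inj sub em ej]]] := box_exists fXY.
  have frange : finite_set (range emb) by apply: finite_image; exact: finite_finset.
  have Hsum : forall z (Z : set _), finite_set Z -> Z `<=` X `|` Y ->
      \sum_(w \in Z) hh gi f z w <= \sum_a hh gi f z (emb a).
    move=> z Z fZ sZ; rewrite -lee_fin -box_sum // -fsumEFin //.
    apply: lee_fsum_nneg_subset => //.
      by move=> w; rewrite !inE => /sZ/sub.
    by move=> t _; rewrite lee_fin hh_ge0.
  have Hbox : forall z, \sum_a hh gi f z (emb a) <= F z.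
    move=> z; rewrite -lee_fin -box_sum // -hfin.
    by apply: esum_ge; exists (range emb) => //; split.
  have four := @four_functions R d N (fun a => hh gi f x (emb a)) (fun a => hh gi f y (emb a))
    (fun a => hh gi f (zmeet x y) (emb a)) (fun a => hh gi f (zjoin x y) (emb a)).
  have {}four := four (fun a => hh_ge0 _ _ g0 f0) (fun a => hh_ge0 _ _ g0 f0)
    (fun a => hh_ge0 _ _ g0 f0) (fun a => hh_ge0 _ _ g0 f0).
  have {}four : (\sum_a hh gi f x (emb a)) * (\sum_a hh gi f y (emb a)) <=
      (\sum_a hh gi f (zmeet x y) (emb a)) * (\sum_a hh gi f (zjoin x y) (emb a)).
    by apply: four => a b /=; rewrite em ej; exact: hh_lsm.
  apply: le_trans (_ : _ <= (\sum_a hh gi f x (emb a)) * (\sum_a hh gi f y (emb a))) _.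
    apply: ler_pM.
    - by apply: fsumr_ge0 => w _; exact: hh_ge0.
    - by apply: fsumr_ge0 => w _; exact: hh_ge0.
    - by apply: Hsum => // w Xw; left.
    - by apply: Hsum => // w Yw; right.
  apply: le_trans four _.
  by apply: ler_pM; rewrite ?sumr_ge0 // => a _; exact: hh_ge0.
set c := F (zmeet x y) * F (zjoin x y).
have c0 : 0 <= c by rewrite mulr_ge0.
have [Fy0|Fyp] := eqVneq (F y) 0; first by rewrite Fy0 mulr0.
have Fyp' : 0 < F y by rewrite lt_def Fyp F0.
rewrite -ler_pdivlMr //.
apply: fine_esum_le => [w|X fX]; first exact: hh_ge0.
rewrite ler_pdivlMr //.
set s := \sum_(w \in X) hh gi f x w.
have s0 : 0 <= s by apply: fsumr_ge0 => w _; exact: hh_ge0.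
have [sz|sp] := eqVneq s 0; first by rewrite sz mul0r.
have sp' : 0 < s by rewrite lt_def sp s0.
have : F y <= c / s.
  apply: fine_esum_le => [w|Y fY]; first exact: hh_ge0.
  by rewrite ler_pdivlMr // mulrC; exact: PS.
by rewrite ler_pdivlMr // mulrC.
Qed.

Close Scope classical_set_scope.
Unset Implicit Arguments.

Theorem theorem3p5 (R : realType) (d : nat)
  (gi : 'I_d -> int -> R) (f : {ffun 'I_d -> int} -> R) :
  (forall i n, 0 <= gi i n) ->
  (forall i, summable_fun (gi i)) ->
  (forall i, log_concave_Z (gi i)) ->
  (forall z, 0 <= f z) ->
  summable_fun f ->
  log_supermodular f ->
  log_supermodular (zconv f (fun z => \prod_(i < d) gi i (z i))).
Proof. exact: theorem3p5_aux. Qed.
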